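(* Let $\mathcal{E},\mathcal{E}'$ be coarse structures on a set $X$ such that $\delta_{(X,\mathcal{E})}=\delta_{(X,\mathcal{E}')}$. Then $so(X,\mathcal{E})=so(X,\mathcal{E}')$.
   Context: A ballean $(X,\mathcal{E})$ is a set with a coarse structure. $E[x]=\{y:(x,y)\in E\}$, $E[A]=\bigcup_{a\in A}E[a]$. $Y$ is bounded if $Y\subseteq E[x]$ for some $x$ and $E\in\mathcal{E}$. For subsets $A,B\subseteq X$, $A\,\delta_{(X,\mathcal{E})}\,B$ means there is $E\in\mathcal{E}$ with $A\subseteq E[B]$ and $B\subseteq E[A]$. A function $f:X\to\mathbb{R}$ is slowly oscillating if for every $E\in\mathcal{E}$ and $\varepsilon>0$ there is a bounded $B$ with $\operatorname{diam} f(E[x])<\varepsilon$ for all $x\in X\setminus B$; $so(X,\mathcal{E})$ denotes the set of bounded slowly oscillating functions $X\to\mathbb{R}$. *)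

(* Defs.v *)
From Stdlib Require Import Reals.
Open Scope R_scope.

(* Entourages (subsets of X x X) as relations. *)
Definition rel (X : Type) := X -> X -> Prop.

Definition diag {X : Type} : rel X := fun x y => x = y.
Definition rel_inv {X : Type} (E : rel X) : rel X := fun x y => E y x.
Definition rel_comp {X : Type} (E F : rel X) : rel X :=
  fun x z => exists y, E x y /\ F y z.
Definition rel_union {X : Type} (E F : rel X) : rel X := fun x y => E x y \/ F x y.
Definition rel_sub {X : Type} (E F : rel X) : Prop := forall x y, E x y -> F x y.

Definition coarse_structure {X : Type} (C : rel X -> Prop) : Prop :=
  C diag /\
  (forall E F, C E -> rel_sub F E -> C F) /\
  (forall E F, C E -> C F -> C (rel_union E F)) /\
  (forall E, C E -> C (rel_inv E)) /\
  (forall E F, C E -> C F -> C (rel_comp E F)).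

(* Balls: E[x] = {y | (x,y) in E}, E[A] = union of E[a], a in A. *)
Definition ball {X : Type} (E : rel X) (x : X) : X -> Prop := fun y => E x y.
Definition ball_set {X : Type} (E : rel X) (A : X -> Prop) : X -> Prop :=
  fun y => exists a, A a /\ E a y.

Definition subset {X : Type} (A B : X -> Prop) : Prop := forall x, A x -> B x.

Definition bounded {X : Type} (C : rel X -> Prop) (Y : X -> Prop) : Prop :=
  exists x E, C E /\ subset Y (ball E x).

Definition delta {X : Type} (C : rel X -> Prop) (A B : X -> Prop) : Prop :=
  exists E, C E /\ subset A (ball_set E B) /\ subset B (ball_set E A).

(* diam f(S) < eps  (diameter = sup of pairwise distances, 0 if S empty). *)
Definition diam_lt {X : Type} (f : X -> R) (S : X -> Prop) (eps : R) : Prop :=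
  exists d, d < eps /\ forall y z, S y -> S z -> Rabs (f y - f z) <= d.

Definition slowly_oscillating {X : Type} (C : rel X -> Prop) (f : X -> R) : Prop :=
  forall E eps, C E -> 0 < eps ->
    exists B, bounded C B /\
      forall x, ~ B x -> diam_lt f (ball E x) eps.

Definition bounded_fun {X : Type} (f : X -> R) : Prop :=
  exists M, forall x, Rabs (f x) <= M.

Definition so {X : Type} (C : rel X -> Prop) (f : X -> R) : Prop :=
  bounded_fun f /\ slowly_oscillating C f.

(* Main.v *)
Require Import Defs.
From Stdlib Require Import Reals Lra Lia Classical ZArith.
Open Scope R_scope.

Lemma fin_union (X : Type) (C : rel X -> Prop) (d : C diag)
  (u : forall E F, C E -> C F -> C (rel_union E F))
  (P : nat -> rel X -> Prop)
  (mono : forall k E F, rel_sub E F -> P k E -> P k F)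
  (ex : forall k, exists E, C E /\ P k E) :
  forall n, exists E, C E /\ forall k, (k < n)%nat -> P k E.
Proof.
  induction n as [|n IH].
  - exists diag. split; [exact d|]. intros k Hk; inversion Hk.
  - destruct IH as [E [HE HP]]. destruct (ex n) as [F [HF HPF]].
    exists (rel_union E F). split; [apply u; auto|].
    intros k Hk. destruct (Nat.eq_dec k n) as [->|Hne].
    + apply (mono n F); [intros a b Hab; right; exact Hab|exact HPF].
    + apply (mono k E); [intros a b Hab; left; exact Hab|]. apply HP. lia.
Qed.

Lemma bounded_transfer (X : Type) (C C' : rel X -> Prop) (hC : coarse_structure C)
  (hC' : coarse_structure C') (hd : forall A B, delta C A B -> delta C' A B) Y :
  Defs.bounded C Y -> Defs.bounded C' Y.
Proof.
  destruct hC as [d [s [u [i c]]]]. destruct hC' as [d' _].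
  intros [x [E [HE HY]]].
  destruct (classic (exists y0, Y y0)) as [[y0 Hy0]|Hn].
  - assert (Hdl : delta C Y (fun a => a = x)).
    { exists (rel_union E (rel_inv E)). split; [apply u; auto|split].
      + intros y Hy. exists x. split; [reflexivity|]. left. apply HY; exact Hy.
      + intros a Ha. subst a. exists y0. split; [exact Hy0|]. right. unfold rel_inv. apply HY; exact Hy0. }
    destruct (hd _ _ Hdl) as [F [HF [H1 _]]].
    exists x, F. split; [exact HF|]. intros y Hy. destruct (H1 y Hy) as [a [Ha Hfa]]. subst a. exact Hfa.
  - exists x, diag. split; [exact d'|]. intros y Hy. exfalso; apply Hn; eauto.
Qed.

Lemma so_dir (X : Type) (C C' : rel X -> Prop) (hC : coarse_structure C)
  (hC' : coarse_structure C') (hd : forall A B, delta C' A B -> delta C A B)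
  (hb : forall Y, Defs.bounded C Y -> Defs.bounded C' Y) f : so C f -> so C' f.
Proof.
  intros [[M HM] Hso]. split; [exists M; exact HM|].
  destruct hC as [d [s [u [i c]]]]. destruct hC' as [d' [s' [u' [i' c']]]].
  intros E' eps HE' Heps.
  set (h := eps/4). assert (Hh: 0 < h) by (unfold h; lra).
  set (sk := fun k:nat => -M + INR k * h).
  set (L := fun k z => exists x y, E' x y /\ E' x z /\ f z <= sk k /\ f y >= sk k + h).
  set (H := fun k y => exists x z, E' x y /\ E' x z /\ f z <= sk k /\ f y >= sk k + h).
  assert (Hex : forall k, exists E, C E /\ subset (L k) (ball_set E (H k))).
  { intro k. assert (Hdl : delta C' (L k) (H k)).
    { exists (rel_comp (rel_inv E') E'). split; [apply c'; auto|split].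
      - intros z [x [y [H1 [H2 [H3 H4]]]]]. exists y. split.
        + exists x, z. auto.
        + exists x. split; assumption.
      - intros y [x [z [H1 [H2 [H3 H4]]]]]. exists z. split.
        + exists x, y. auto.
        + exists x. split; assumption. }
    destruct (hd _ _ Hdl) as [E [HE [H1 _]]]. exists E; auto. }
  set (N := Z.to_nat (up (2*M/h + 2))).
  destruct (fin_union X C d u (fun k E => subset (L k) (ball_set E (H k))))
    with (n := N) as [E0 [HE0 HP]].
  { intros k E F Hsub HP z Hz. destruct (HP z Hz) as [a [Ha Hea]]. exists a; split; auto. }
  { exact Hex. }
  set (E1 := rel_union (rel_inv E0) diag).
  destruct (Hso E1 h (u _ _ (i _ HE0) d) Hh) as [B0 [HB0 Hdiam]].
  assert (HLB : forall k, (k < N)%nat -> forall z, L k z -> B0 z).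
  { intros k Hk z Hz. apply NNPP; intro Hn. destruct (Hdiam z Hn) as [dd [Hdd Hab]].
    destruct (HP k Hk z Hz) as [y [Hy Hyz]].
    assert (Hzz : ball E1 z z) by (right; reflexivity).
    assert (Hzy : ball E1 z y) by (left; exact Hyz).
    specialize (Hab z y Hzz Hzy).
    destruct Hz as [_ [_ [_ [_ [Hz3 _]]]]]. destruct Hy as [_ [_ [_ [_ [_ Hy4]]]]].
    pose proof (Rle_abs (f y - f z)). rewrite Rabs_minus_sym in Hab. lra. }
  destruct (hb B0 HB0) as [x0 [G [HG HBG]]].
  exists (fun x => exists y z, E' x y /\ E' x z /\ f y - f z > 2*h). split.
  - exists x0, (rel_comp G (rel_inv E')). split; [apply c'; auto|].
    intros x [y [z [Hy [Hz Hyz]]]].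
    pose proof (HM z) as HMz. pose proof (HM y) as HMy.
    pose proof (Rle_abs (f z)). pose proof (Rle_abs (- f z)). rewrite Rabs_Ropp in *.
    pose proof (Rle_abs (f y)). pose proof (Rle_abs (- f y)). rewrite Rabs_Ropp in *.
    set (r := (f z + M)/h).
    assert (Hr0 : 0 <= r).
    { unfold r, Rdiv. apply Rmult_le_pos; [lra|left; apply Rinv_0_lt_compat; lra]. }
    assert (Hr1 : r <= 2*M/h).
    { unfold r, Rdiv. apply Rmult_le_compat_r; [left; apply Rinv_0_lt_compat; lra|lra]. }
    assert (Hrh: r*h = f z + M) by (unfold r; field; lra).
    destruct (archimed r) as [Hup1 Hup2].
    set (k := Z.to_nat (up r)).
    assert (Hk: INR k = IZR (up r)).
    { unfold k. rewrite INR_IZR_INZ, Z2Nat.id; auto. apply le_IZR; simpl; lra. }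
    assert (HkN: (k < N)%nat).
    { apply INR_lt. rewrite Hk. unfold N.
      destruct (archimed (2*M/h+2)) as [A1 A2].
      rewrite INR_IZR_INZ, Z2Nat.id; [lra|]. apply le_IZR; simpl; lra. }
    assert (Hkh1 : INR k * h > r * h) by (apply Rmult_lt_compat_r; lra).
    assert (Hkh2 : INR k * h <= (r + 1) * h) by (apply Rmult_le_compat_r; lra).
    assert (HLk : L k z).
    { exists x, y. split; [exact Hy|split; [exact Hz|]]. unfold sk. split; lra. }
    pose proof (HLB k HkN z HLk) as HBz. exists z. split; [apply HBG; exact HBz | exact Hz].
  - intros x Hx. exists (2*h). split; [unfold h; lra|]. intros a b Ha Hb.
    apply Rabs_le. split.
    + apply Rnot_lt_le. intro Hlt. apply Hx. exists b, a. repeat split; auto; lra.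
    + apply Rnot_lt_le. intro Hlt. apply Hx. exists a, b. repeat split; auto; lra.
Qed.

Theorem mainTheorem10 (X : Type) (C C' : rel X -> Prop)
  (hC : coarse_structure C) (hC' : coarse_structure C')
  (hdelta : forall A B : X -> Prop, delta C A B <-> delta C' A B) :
  forall f : X -> R, so C f <-> so C' f.
Proof.
  intro f. split.
  - apply so_dir; auto.
    + intros A B; apply hdelta.
    + apply bounded_transfer; auto. intros A B; apply hdelta.
  - apply so_dir; auto.
    + intros A B; apply hdelta.
    + apply bounded_transfer; auto. intros A B; apply hdelta.
Qed.
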